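(* The measure space $(\mathbb{R}^{\mathbb{N}},\mu)$ is not localizable.
   Context: Let $\mathcal{B}$ be the Borel $\sigma$-algebra of $\mathbb{R}$, $\lambda$ the Lebesgue measure, and $\mathcal{B}_{\infty}$ the $\sigma$-algebra on $\mathbb{R}^{\mathbb{N}}$ generated by the cylinder sets $\prod_{i=1}^{m}C_{i}\times\prod_{i=m+1}^{\infty}\mathbb{R}$ with $C_i\in\mathcal{B}$, $m\in\mathbb{N}$. Let $\mathcal{F}(\mathcal{B},\lambda)$ be the set of finite rectangles $\prod_{i\in\mathbb{N}}C_{i}$ with $C_i\in\mathcal{B}$ and $\prod_{i}\lambda(C_i)\in[0,\infty)$, with $\mathrm{vol}(\prod_{i}C_i):=\prod_i\lambda(C_i)$. The measure $\mu$ is the restriction to $\mathcal{B}_{\infty}$ of the outer measure $\mu^{\ast}(A):=\inf\{\sum_{n}\mathrm{vol}(\mathscr{C}_{n}) : \mathscr{C}_{n}\in\mathcal{F}(\mathcal{B},\lambda),\ A\subset\bigcup_{n}\mathscr{C}_{n}\}$ ($\inf\varnothing=\infty$). A measure space $(X,\Sigma,\nu)$ is localizable if $\nu$ is semi-finite and every $\mathcal{E}\subset\Sigma$ admits an essential supremum, i.e., some $H_{\mathcal{E}}\in\Sigma$ with $\nu(E\setminus H_{\mathcal{E}})=0$ for all $E\in\mathcal{E}$, and such that whenever $G\in\Sigma$ satisfies $\nu(E\setminus G)=0$ for all $E\in\mathcal{E}$, then $\nu(H_{\mathcal{E}}\setminus G)=0$. *)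

(* Defs.v *)
From HB Require Import structures.
From mathcomp Require Import all_boot all_order all_algebra.
From mathcomp Require Import all_classical all_reals all_analysis.
Set Implicit Arguments. Unset Strict Implicit. Unset Printing Implicit Defensive.
Import Order.TTheory GRing.Theory Num.Theory.
Local Open Scope classical_set_scope.
Local Open Scope ring_scope.
Local Open Scope ereal_scope.

Section Defs.
Variable R : realType.

Definition borel (C : set R) : Prop := @measurable _ (measurableTypeR R) C.
Definition lam (C : set R) : \bar R := @lebesgue_measure R C.

Definition cylinders : set (set (nat -> R)) :=
  [set A | exists (m : nat) (C : nat -> set R),
      (forall i, borel (C i)) /\
      A = [set x | forall i, (i < m)%N -> C i (x i)]].

Definition B_infty : set (set (nat -> R)) := <<s cylinders >>.

Definition rect (C : nat -> set R) : set (nat -> R) :=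
  [set x | forall i, C i (x i)].

Definition partial_vol (C : nat -> set R) (n : nat) : \bar R :=
  \prod_(i < n) lam (C i).

Definition finite_rect (C : nat -> set R) : Prop :=
  (forall i, borel (C i)) /\
  exists v : R, partial_vol C @ \oo --> v%:E.

Definition vol (C : nat -> set R) : \bar R := lim (partial_vol C @ \oo).

(* outer measure mu^* (inf of empty set = +oo via ereal_inf) *)
Definition mu_star (A : set (nat -> R)) : \bar R :=
  ereal_inf [set s | exists Cs : nat -> nat -> set R,
      (forall n, finite_rect (Cs n)) /\
      A `<=` \bigcup_n rect (Cs n) /\
      s = \sum_(0 <= n <oo) vol (Cs n)].

End Defs.

Section Localizable.
Variables (R : realType) (X : Type) (Sigma : set (set X)) (nu : set X -> \bar R).

Definition semifinite_ms : Prop :=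
  forall E, Sigma E -> nu E = +oo ->
    exists F, [/\ Sigma F, F `<=` E & 0 < nu F < +oo].

Definition is_ess_sup (Ecal : set (set X)) (H : set X) : Prop :=
  [/\ Sigma H,
      (forall E, Ecal E -> nu (E `\` H) = 0) &
      (forall G, Sigma G -> (forall E, Ecal E -> nu (E `\` G) = 0) ->
         nu (H `\` G) = 0)].

Definition localizable : Prop :=
  semifinite_ms /\
  forall Ecal : set (set X), Ecal `<=` Sigma -> exists H, is_ess_sup Ecal H.
End Localizable.

(* Main.v *)
Require Import Defs.
From mathcomp Require Import all_boot all_order all_algebra.
From mathcomp Require Import all_classical all_reals all_analysis.
From mathcomp Require Import lra.
Set Implicit Arguments. Unset Strict Implicit. Unset Printing Implicit Defensive.
Import Order.TTheory GRing.Theory Num.Theory numFieldNormedType.Exports.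
Local Open Scope classical_set_scope.
Local Open Scope ring_scope.
Local Open Scope ereal_scope.



Section Aux.
Variable R : realType.

Lemma prod_gt0 (a : nat -> \bar R) k :
  (forall j, 0 < a j) -> 0 < \prod_(j < k) a j.
Proof.
move=> ha; elim: k => [|k IH]; first by rewrite big_ord0 lte01.
by rewrite big_ord_recr /= mule_gt0.
Qed.

Lemma prod_zero (a : nat -> \bar R) i k :
  a i = 0 -> (i < k)%N -> \prod_(j < k) a j = 0.
Proof.
move=> ai ik; rewrite (bigD1 (Ordinal ik)) //= ai mul0e //.
Qed.

Lemma prod_inf (a : nat -> \bar R) i k :
  (forall j, 0 < a j) -> a i = +oo -> (i < k)%N -> \prod_(j < k) a j = +oo.
Proof.
move=> ha ai; elim: k => [//|k IH].
rewrite ltnS leq_eqVlt => /orP[/eqP <-|ik].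
  by rewrite big_ord_recr /= ai gt0_muley // prod_gt0.
by rewrite big_ord_recr /= IH // gt0_mulye.
Qed.

Lemma lim_ev_cst (u : nat -> \bar R) l c N :
  u @ \oo --> l -> (forall k, (N <= k)%N -> u k = c) -> l = c.
Proof.
move=> ul uc.
have : u @ \oo --> c.
  apply: cvg_near_cst; exists N => // k /= Nk; exact: uc.
move=> uc'; exact: (cvg_unique _ ul uc').
Qed.

Lemma finite_rect_cases (C : nat -> set R) :
  finite_rect C ->
  (exists j, lam (C j) = 0) \/ (forall j, 0 < lam (C j) < +oo).
Proof.
move=> [bC [v hv]].
case: (pselect (exists j, lam (C j) = 0)) => [h|h]; [by left|right].
have pos : forall j, 0 < lam (C j).
  move=> j; rewrite lt0e measure_ge0 andbT; apply/eqP => hj; apply: h; by exists j.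
move=> j; rewrite pos /= ltey; apply/eqP => hj.
have := lim_ev_cst hv (fun k (hk : (j.+1 <= k)%N) => prod_inf pos hj hk).
by [].
Qed.

End Aux.



Section E.
Variable R : realType.

Definition Sset (i : nat) : set R := `[0%R, (i.+1%:R)^-1%R]%classic.

Definition Eset : set (nat -> R) := [set x | forall i, ~~ odd i -> Sset i (x i)].

Lemma borel_S i : borel (Sset i).
Proof. exact: measurable_itv. Qed.

Lemma lam_S i : lam (Sset i) = ((i.+1%:R)^-1)%R%:E.
Proof.
by rewrite /lam /Sset lebesgue_measure_itv /= lte_fin invr_gt0 ltr0Sn oppr0 adde0.
Qed.

Lemma B_infty_E : B_infty Eset.
Proof.
move=> M [[M0 MC MU] MG].
pose cyl i := [set x : nat -> R | ~~ odd i -> Sset i (x i)].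
have Mcyl : forall i, M (cyl i).
  move=> i; apply: MG; exists i.+1, (fun k => if (k == i) && ~~ odd i then Sset i else setT).
  split.
    by move=> k; case: ifP => _; [exact: borel_S| exact: measurableT].
  apply/seteqP; split => x /=.
    move=> h k; rewrite ltnS => ki; case: ifP => // /andP[/eqP -> oi]; exact: h.
  move=> h oi; have := h i (ltnSn i); by rewrite eqxx oi.
have -> : Eset = setT `\` \bigcup_i (setT `\` cyl i).
  apply/seteqP; split => x /=.
    move=> h; split => // -[i _ /=] [_]; apply; exact: h.
  move=> [_ h] i oi; apply: contrapT => nS; apply: h; exists i => //=; split => //.
  by move/(_ oi).
apply: (MC); apply: MU => i; apply: MC; exact: Mcyl.
Qed.

End E.



Section Cover.
Variable R : realType.

Lemma exists_outside (A B : set R) :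
  borel A -> borel B -> lam A < lam B -> exists y, B y /\ ~ A y.
Proof.
move=> mA mB AB; apply: contrapT => h.
have BA : B `<=` A.
  move=> y By; apply: contrapT => nA; apply: h; by exists y.
have := le_measure lebesgue_measure (mem_set mB) (mem_set mA) BA.
by rewrite /lam in AB; rewrite leNgt AB.
Qed.

Lemma not_cover (Cs : nat -> nat -> set R) :
  (forall n, finite_rect (Cs n)) -> ~ ((@Eset R) `<=` \bigcup_n rect (Cs n)).
Proof.
move=> hf cov.
pose N j := \bigcup_n (if lam (Cs n j) == 0 then Cs n j else set0).
pose O j := if odd j && (lam (Cs j./2 j) < +oo) then Cs j./2 j else set0.
pose F j := N j `|` O j.
have bC : forall n j, borel (Cs n j) by move=> n j; have [h _] := hf n; exact: h.
have bN : forall j, borel (N j).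
  move=> j; apply: bigcupT_measurable => n; case: ifP => _; [exact: bC | exact: measurable0].
have bO : forall j, borel (O j) by move=> j; rewrite /O; case: ifP => _; [exact: bC | exact: measurable0].
have bF : forall j, borel (F j) by move=> j; exact: measurableU (bN j) (bO j).
have lN : forall j, lam (N j) = 0.
  move=> j; apply/eqP; rewrite eq_le measure_ge0 andbT.
  have mP : forall n, borel (if lam (Cs n j) == 0 then Cs n j else set0).
    by move=> n; case: ifP => _; [exact: bC | exact: measurable0].
  have h := @measure_sigma_subadditive _ _ _ lebesgue_measure (N j) _ mP (bN j) (@subset_refl _ _).
  apply: le_trans h _; rewrite eseries0 // => n _ _.
  case: ifP => [/eqP //|_]; exact: measure0.
have lO : forall j, lam (O j) < +oo.
  by move=> j; rewrite /O; case: ifP => [/andP[_ h] //|_]; rewrite /lam measure0.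
have lF : forall j, lam (F j) <= lam (O j).
  have h0 : forall A B : \bar R, A = 0 -> A + B <= B by move=> ? ? ->; rewrite add0e.
  move=> j; exact: le_trans (measureU2 _ (bN j) (bO j)) (h0 _ _ (lN j)).
have ex : forall j, exists y,
    (if odd j then `[0%R, (fine (lam (F j)) + 1)%R]%classic else Sset j) y /\ ~ F j y.
  move=> j; apply: exists_outside => //.
    by case: ifP => _; [exact: measurable_itv | exact: borel_S].
  have F0 : 0 <= lam (F j) by exact: measure_ge0.
  have Ffin : lam (F j) \is a fin_num.
    by rewrite ge0_fin_numE //; exact: le_lt_trans (lF j) (lO j).
  case: ifP => oj.
    rewrite /lam lebesgue_measure_itv /= lte_fin ltr_wpDl ?fine_ge0 //.
    rewrite oppr0 adde0 -[X in X < _](fineK Ffin) lte_fin ltrDl //.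
  rewrite lam_S; apply: le_lt_trans (lF j) _.
  by rewrite /O oj /= /lam measure0 lte_fin invr_gt0 ltr0Sn.
have [x hx] := choice ex.
have xE : @Eset R x.
  by move=> i oi; have [] := hx i; rewrite (negbTE oi).
have [n _ xr] := cov x xE.
case: (finite_rect_cases (hf n)) => [[j hj]|hfin].
  have [_] := hx j; apply; left; exists n => //; rewrite hj eqxx; exact: xr j.
pose j := n.*2.+1.
have [_] := hx j; apply; right; rewrite /O.
have oj : odd j by rewrite /j /= odd_double.
have hj : j./2 = n by rewrite /j -[n.*2.+1]/(true + n.*2)%N half_bit_double.
rewrite hj oj /=; have /andP[_ ->] := hfin j; exact: xr j.
Qed.

Lemma mu_star_E : mu_star (@Eset R) = +oo.
Proof.
rewrite /mu_star.
have -> : [set s | exists Cs : nat -> nat -> set R,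
      (forall n, finite_rect (Cs n)) /\
      (@Eset R) `<=` \bigcup_n rect (Cs n) /\
      s = \sum_(0 <= n <oo) vol (Cs n)] = set0.
  apply/seteqP; split => s //= [Cs [hf [cov _]]]; exact: not_cover hf cov.
exact: ereal_inf0.
Qed.

End Cover.



Section Key.
Variable R : realType.

Lemma key (C : nat -> set R) : finite_rect C -> forall e : R, (0 < e)%R ->
  exists C', finite_rect C' /\ (@Eset R `&` rect C `<=` rect C') /\
             0 <= vol C' /\ vol C' <= e%:E.
Proof.
move=> hC e e0; have [bC [v hv]] := hC.
have volC : vol C = v%:E by exact: cvg_lim hv.
have v0 : (0 <= v)%R.
  rewrite -lee_fin -volC; apply: lime_ge; first by apply/cvg_ex; exists v%:E.
  apply: nearW => k; apply: prode_ge0 => j _; exact: measure_ge0.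
have [vz|vpos] := eqVneq v 0%R.
  exists C; split => //; split; first by move=> x [].
  by rewrite volC vz lee_fin lexx ltW.
have {vpos} vpos : (0 < v)%R by rewrite lt_def vpos v0.
have [[j hj]|hfin] := finite_rect_cases hC.
  have := lim_ev_cst hv (fun k (hk : (j.+1 <= k)%N) => @prod_zero R (fun i => lam (C i)) _ _ hj hk).
  by move=> [] /eqP; rewrite gt_eqF.
pose c j := fine (lam (C j)).
have lc : forall j, lam (C j) = (c j)%:E.
  move=> j; rewrite fineK //; have /andP[h1 h2] := hfin j.
  by rewrite ge0_fin_numE // ltW.
have c0 : forall j, (0 < c j)%R.
  by move=> j; rewrite -lte_fin -lc; have /andP[] := hfin j.
pose p k := (\prod_(j < k) c j)%R.
have pv : forall k, partial_vol C k = (p k)%:E.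
  by move=> k; rewrite /partial_vol; under eq_bigr => j _ do rewrite lc; rewrite prodEFin.
have hp : (p n : R) @[n --> \oo] --> (v : R).
  have -> : p = fine \o partial_vol C by apply/funext => k; rewrite /= pv.
  exact: fine_cvg hv.
have v4 : (0 < v / 4)%R by rewrite divr_gt0.
have [N _ hN] := cvgr_dist_lt _ _ hp _ v4.
have cbig : forall k, (N <= k)%N -> (1/2 <= c k)%R.
  move=> k Nk.
  have h1 := hN k Nk; have h2 := hN k.+1 (leqW Nk).
  rewrite /= ltr_distlC in h1; rewrite /= ltr_distlC in h2.
  have pS : p k.+1 = (p k * c k)%R by rewrite /p big_ord_recr.
  have pk0 : (0 < p k)%R by rewrite /p; apply: prodr_gt0 => i _; exact: c0.
  move: h1 h2; rewrite pS => /andP[h1 h1'] /andP[h2 h2'].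
  rewrite leNgt; apply/negP => ck.
  have : (p k * c k < p k * (1/2))%R by rewrite ltr_pM2l.
  lra.
pose K := (Num.Def.trunc (2 * v / e)%R).+1.
pose i2 := (N + K)%N.*2.
have iN : (N <= i2)%N.
  rewrite /i2 -addnn; apply: leq_trans (leq_addr K N) (leq_addr _ _).
have hc2 := cbig i2 iN.
pose m := (i2.+1)%:R : R.
have m0 : (0 < m)%R by rewrite /m ltr0Sn.
have mK : (2 * v / e < m)%R.
  apply: lt_le_trans (truncnS_gt _) _; rewrite /m ler_nat.
  rewrite /i2 -addnn; apply: leq_trans (leq_addl N K) _.
  apply: leq_trans (leq_addr (N + K) (N + K)) (leqnSn _).
pose D := C i2 `&` Sset i2.
have bD : borel D by apply: measurableI; [exact: bC | exact: (@borel_S R i2)].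
have lD0 : 0 <= lam D by exact: measure_ge0.
have lDS : lam D <= lam (Sset i2).
  have hS : borel (@Sset R i2) := @borel_S R i2. have := le_measure lebesgue_measure (mem_set bD) (mem_set hS); apply; exact: subIsetr.
have Dfin : lam D \is a fin_num.
  by rewrite ge0_fin_numE //; apply: le_lt_trans lDS _; rewrite lam_S ltey.
pose d := fine (lam D).
have ld : lam D = d%:E by rewrite fineK.
have d0 : (0 <= d)%R by rewrite -lee_fin -ld.
have dm : (d <= m^-1)%R by rewrite -lee_fin -ld -lam_S.
pose r := (d / c i2)%R.
pose C' j := if j == i2 then D else C j.
pose c' j := if j == i2 then d else c j.
have lc' : forall j, lam (C' j) = (c' j)%:E by move=> j; rewrite /C' /c'; case: ifP.
have c'E : forall j, c' j = (c j * (if j == i2 then r else 1))%R.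
  move=> j; rewrite /c' /r; case: ifP => [/eqP ->|_].
    by rewrite mulrC divfK // gt_eqF.
  by rewrite mulr1.
pose p' k := (\prod_(j < k) c' j)%R.
have p'E : forall k, (i2 < k)%N -> p' k = (p k * r)%R.
  move=> k hk; rewrite /p' /p; under eq_bigr => j _ do rewrite c'E.
  rewrite big_split /=; congr (_ * _)%R.
  rewrite (bigD1 (Ordinal hk)) //= eqxx big1 ?mulr1 // => j hj.
  case: eqP => // hji; move/eqP: hj; case; exact: val_inj.
have hp' : p' n @[n --> \oo] --> (v * r)%R.
  have h : (p n * r)%R @[n --> \oo] --> (v * r)%R by apply: cvgMl.
  apply: cvg_trans h; apply: near_eq_cvg; exists i2.+1 => // k' /= hk'.
  by rewrite p'E.
have pv' : partial_vol C' = (fun k => (p' k)%:E).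
  apply/funext => k; rewrite /partial_vol; under eq_bigr => j _ do rewrite lc'.
  by rewrite prodEFin.
have cv' : partial_vol C' @ \oo --> (v * r)%:E.
  rewrite pv'; apply: cvg_EFin; [by apply: nearW | exact: hp'].
have volC' : vol C' = (v * r)%:E by exact: cvg_lim cv'.
exists C'; split.
  split; first by move=> j; rewrite /C'; case: ifP => _; [exact: bD | exact: bC].
  by exists (v * r)%R.
split.
  move=> x [xE xC] j; rewrite /C'; case: ifP => [/eqP ->|_]; last exact: xC.
  split; first exact: xC.
  by apply: xE; rewrite /i2 odd_double.
have r0 : (0 <= r)%R by rewrite /r divr_ge0 // ltW.
rewrite volC' !lee_fin mulr_ge0 //; split => //.
have rc : (r * c i2 = d)%R by rewrite /r divfK // gt_eqF.
have h1 : (v * r <= 2 * v * d)%R.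
  rewrite -rc; have vr := mulr_ge0 v0 r0; nra.
have h2 : (d * m <= 1)%R by rewrite -ler_pdivlMr // div1r.
have h3 : (2 * v < e * m)%R by rewrite -ltr_pdivrMl // mulrC.
nra.
Qed.

End Key.



Section Small.
Variable R : realType.

Lemma small (F : set (nat -> R)) :
  F `<=` @Eset R -> mu_star F < +oo -> mu_star F <= 0.
Proof.
move=> FE hF.
case: (pselect (exists Cs : nat -> nat -> set R, (forall n, finite_rect (Cs n)) /\
    F `<=` \bigcup_n rect (Cs n))) => [[Cs [hf cov]] | h]; last first.
  exfalso; move: hF; rewrite /mu_star (_ : [set s | _] = set0) ?ereal_inf0 //.
  apply/seteqP; split => s // [Cs [hf [cov _]]]; apply: h; by exists Cs.
apply/lee_addgt0Pr => e e0; rewrite add0e.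
have Kn : forall n, exists C', finite_rect C' /\ (@Eset R `&` rect (Cs n) `<=` rect C') /\
    0 <= vol C' /\ vol C' <= (e / (2 ^ n.+1)%:R)%:E.
  move=> n; apply: key (hf n) _ _; by rewrite divr_gt0 // ltr0n expn_gt0.
have [C' hC'] := choice Kn.
apply: (@le_trans _ _ (\sum_(0 <= n <oo) vol (C' n))).
  apply: ereal_inf_lbound; exists C'; split; first by move=> n; have [h _] := hC' n.
  split => //.
  move=> x Fx; have [n _ xn] := cov x Fx; exists n => //.
  by apply: (hC' n).2.1; split; [exact: FE | exact: xn].
apply: (@le_trans _ _ (\sum_(0 <= n <oo) (0 + (e / (2 ^ n.+1)%:R)%:E))).
  apply: lee_nneseries => n.
    by move=> _ _; have [_ [_ [h _]]] := hC' n.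
  by move=> _; rewrite add0e; have [_ [_ [_ h]]] := hC' n.
have := @epsilon_trick R (fun=> 0) e xpredT (fun=> lexx 0) (ltW e0).
move=> h; apply: le_trans h _; by rewrite eseries0 // add0e.
Qed.

End Small.

Theorem theoremA1 (R : realType) :
  ~ localizable (@B_infty R) (@mu_star R).
Proof.
move=> [sf _].
have [F [_ FE /andP[F0 Fy]]] := sf _ (@B_infty_E R) (@mu_star_E R).
have := small FE Fy.
by rewrite leNgt F0.
Qed.
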